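(* Let $I$ be an open interval of real numbers and let $U$ be a subgroup of $\mathrm{Homeo}^+(I)$ such that: (1) the commutator subgroup $[U,U]$ acts freely on $I$ (i.e., every non-identity element of $[U,U]$ has no fixed point in $I$); and (2) each non-identity member of $U$ has at most one fixed point in $I$. Then for every nonempty set $S$ there exists a good $U$-anonymous $S$-predictor on $I$.
   Context: $\mathrm{Homeo}^+(I)$ is the group (under composition) of increasing homeomorphisms of $I$. Write $a=\inf I$ (possibly $-\infty$). For a nonempty set $S$, let ${}^I S$ be the set of total functions $I\to S$, and let $\mathcal{D}$ be the set of all functions $f$ with values in $S$ whose domain is $(a,t_f)$ for some $t_f\in I$. An $S$-predictor on $I$ is any function $\mathcal{P}:\mathcal{D}\to S$. It is good if for every $F\in {}^I S$ the set $\{t\in I : \mathcal{P}(F|_{(a,t)})\neq F(t)\}$ has Lebesgue measure zero. For $f\in\mathcal{D}$ and $\varphi\in\mathrm{Homeo}^+(I)$, $f\circ\varphi$ is the function with domain $(a,\varphi^{-1}(t_f))$. For $U\subseteq \mathrm{Homeo}^+(I)$, $\mathcal{P}$ is $U$-anonymous if $\mathcal{P}(f)=\mathcal{P}(f\circ\varphi)$ for all $f\in\mathcal{D}$ and all $\varphi\in U$. The commutator subgroup $[U,U]$ is the subgroup generated by all elements $\alpha\beta\alpha^{-1}\beta^{-1}$ with $\alpha,\beta\in U$. (The Axiom of Choice is assumed.) *)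

(* Defs.v *)
From HB Require Import structures.
From mathcomp Require Import all_boot all_order all_algebra.
From mathcomp Require Import all_classical all_reals all_analysis.
Set Implicit Arguments. Unset Strict Implicit. Unset Printing Implicit Defensive.
Import Order.TTheory GRing.Theory Num.Theory.
Import numFieldNormedType.Exports.
Local Open Scope classical_set_scope.
Local Open Scope ring_scope.

Section Defs.
Variable R : realType.

Definition ointv (a b : \bar R) : set R := [set x : R | (a < x%:E < b)%E].

(* Increasing homeomorphisms of I, represented as maps R -> R that are the
   identity outside I (so composition and equality are those of Homeo^+(I)). *)
Definition homeo_plus (a b : \bar R) (f : R -> R) : Prop :=
  (forall x, ~ ointv a b x -> f x = x) /\
  (forall x, ointv a b x -> ointv a b (f x)) /\
  (forall x y, ointv a b x -> ointv a b y -> x < y -> f x < f y) /\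
  {within ointv a b, continuous f} /\
  exists g : R -> R,
    (forall x, ointv a b x -> ointv a b (g x)) /\
    (forall x, ointv a b x -> g (f x) = x) /\
    (forall y, ointv a b y -> f (g y) = y) /\
    {within ointv a b, continuous g}.

Definition homeo_subgroup (a b : \bar R) (H : set (R -> R)) : Prop :=
  H `<=` homeo_plus a b /\
  H id /\
  (forall f g, H f -> H g -> H (f \o g)) /\
  (forall f, H f -> exists g, H g /\ f \o g = id /\ g \o f = id).

Definition commutators (U : set (R -> R)) : set (R -> R) :=
  [set c | exists alpha beta alphai betai,
     [/\ U alpha, U beta,
         alpha \o alphai = id /\ alphai \o alpha = id,
         beta \o betai = id /\ betai \o beta = id &
         c = alpha \o beta \o alphai \o betai]].

Definition commutator_subgroup (a b : \bar R) (U : set (R -> R)) : set (R -> R) :=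
  [set g | forall H, homeo_subgroup a b H -> commutators U `<=` H -> H g].

(* S-predictors on I: P t h is the prediction for the function h restricted
   to (a, t), t in I; P must depend only on t and h restricted to (a, t). *)
Definition predictor (a b : \bar R) (S : Type) (P : R -> (R -> S) -> S) : Prop :=
  forall t h1 h2, ointv a b t ->
    (forall x, (a < x%:E)%E -> x < t -> h1 x = h2 x) -> P t h1 = P t h2.

Definition good_predictor (a b : \bar R) (S : Type) (P : R -> (R -> S) -> S) : Prop :=
  forall F : R -> S,
    (@lebesgue_measure R).-negligible [set t | ointv a b t /\ P t F <> F t].

(* P(f) = P(f o phi), where f o phi has domain (a, phi^-1(t_f)). *)
Definition anonymous (a b : \bar R) (U : set (R -> R)) (S : Type)
    (P : R -> (R -> S) -> S) : Prop :=
  forall phi t s (h : R -> S), U phi -> ointv a b t -> ointv a b s -> phi s = t ->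
    P t h = P s (h \o phi).

End Defs.

(* Main.v *)
Require Import Defs.
From HB Require Import structures.
From mathcomp Require Import all_boot all_order all_algebra.
From mathcomp Require Import all_classical all_reals all_analysis.
From mathcomp Require Import lra zify wochoice.
Set Implicit Arguments. Unset Strict Implicit. Unset Printing Implicit Defensive.
Import Order.TTheory GRing.Theory Num.Theory.
Import numFieldNormedType.Exports.
Local Open Scope classical_set_scope.
Local Open Scope ring_scope.

Section Main.
Variable R : realType.
Variables a b : \bar R.
Hypothesis ab : (a < b)%E.
Variable U : set (R -> R).
Hypothesis HU : homeo_subgroup a b U.
Hypothesis Hfree : forall g, commutator_subgroup a b U g -> g <> id ->
     forall x, ointv a b x -> g x <> x.

Local Notation I := (ointv a b).

Lemma U_homeo f : U f -> homeo_plus a b f.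
Proof. by case: HU => h _; apply: h. Qed.
Lemma U_id : U id.
Proof. by case: HU => _ []. Qed.
Lemma U_comp f g : U f -> U g -> U (f \o g).
Proof. by case: HU => _ [_ [h _]]; apply: h. Qed.
Lemma U_inv_ex f : U f -> exists g, U g /\ f \o g = id /\ g \o f = id.
Proof. by case: HU => _ [_ [_ h]]; apply: h. Qed.
Lemma U_I f x : U f -> I x -> I (f x).
Proof. by move=> /U_homeo [_ [h _]]; apply: h. Qed.
Lemma U_lt f x y : U f -> I x -> I y -> x < y -> f x < f y.
Proof. by move=> /U_homeo [_ [_ [h _]]]; apply: h. Qed.
Lemma U_ltE f x y : U f -> I x -> I y -> (f x < f y) = (x < y).
Proof.
move=> Uf Ix Iy; case: (ltgtP x y) => [h|h|->]; first by rewrite U_lt.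
- by apply/negbTE; rewrite -leNgt ltW // U_lt.
- by rewrite ltxx.
Qed.
Lemma U_leE f x y : U f -> I x -> I y -> (f x <= f y) = (x <= y).
Proof. by move=> Uf Ix Iy; rewrite !leNgt U_ltE. Qed.
Lemma U_cont f : U f -> {within I, continuous f}.
Proof. by move=> /U_homeo [_ [_ [_ [h _]]]]. Qed.

Definition uinv (f : R -> R) : R -> R :=
  match pselect (exists g, U g /\ f \o g = id /\ g \o f = id) with
  | left P => proj1_sig (cid P) | right _ => id end.

Lemma uinvP f : U f -> [/\ U (uinv f), f \o uinv f = id & uinv f \o f = id].
Proof.
move=> Uf; rewrite /uinv; case: pselect => [P|[]]; last exact: U_inv_ex.
by case: (cid P) => g [? [? ?]].
Qed.
Lemma U_uinv f : U f -> U (uinv f).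
Proof. by case/uinvP. Qed.
Lemma uinvK f x : U f -> f (uinv f x) = x.
Proof. by case/uinvP => _ e _; exact: (congr1 (fun h => h x) e). Qed.
Lemma uinvK' f x : U f -> uinv f (f x) = x.
Proof. by case/uinvP => _ _ e; exact: (congr1 (fun h => h x) e). Qed.
Lemma inv_uniq f g : U f -> f \o g = id -> g = uinv f.
Proof.
move=> Uf e; apply/funext => x.
have fx : f (g x) = x := congr1 (fun h => h x) e.
by have := uinvK' (g x) Uf; rewrite fx.
Qed.

Lemma segI x y z : I x -> I y -> x <= z -> z <= y -> I z.
Proof.
rewrite /ointv /= => /andP[ax _] /andP[_ yb] xz zy; apply/andP; split.
- by apply: (lt_le_trans ax); rewrite lee_fin.
- by apply: (le_lt_trans _ yb); rewrite lee_fin.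
Qed.

Lemma exI : exists x, I x.
Proof.
rewrite /ointv /=; move: ab; case: a => [ra||]; case: b => [rb||] //=.
- rewrite lte_fin => h; exists ((ra + rb) / 2); rewrite !lte_fin.
  by rewrite !midf_lt.
- by move=> _; exists (ra + 1); rewrite ltey andbT lte_fin ltrDl ltr01.
- by move=> ?; exists (rb - 1); rewrite ltNye lte_fin ltrBlDr ltrDl ltr01.
- by move=> _; exists 0; rewrite ltNye ltey.
Qed.

Lemma no_two_sides d x y : U d -> (forall c, I c -> d c <> c) ->
  I x -> I y -> d x < x -> y < d y -> False.
Proof.
move=> Ud nf Ix Iy dx dy.
have key : forall u v, I u -> I v -> u <= v ->
   Num.min (d u - u) (d v - v) <= 0 <= Num.max (d u - u) (d v - v) -> False.
  move=> u v Iu Iv uv neg.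
  have sub : `[u, v] `<=` I.
    by move=> z /=; rewrite in_itv /= => /andP[h1 h2]; exact: segI Iu Iv h1 h2.
  have cd' := continuous_subspaceW sub (U_cont Ud).
  have cid' : {within `[u, v], continuous (@id R)}.
    by apply: continuous_subspaceT => ?; exact: cvg_id.
  have ce : {within `[u, v], continuous (fun z => d z - z)}.
    move=> z; exact: (@continuousB _ _ (subspace `[u,v]) d id z (cd' z) (cid' z)).
  have [c cuv dc] : exists2 c, c \in `[u, v] & d c - c = 0 by apply: IVT.
  apply: (nf c); first by move: cuv; rewrite in_itv /= => /andP[h1 h2]; exact: segI Iu Iv h1 h2.
  by apply/eqP; rewrite -subr_eq0; apply/eqP.
case: (leP x y) => xy.
- apply: (key x y) => //; rewrite ge_min le_max; apply/andP; split; apply/orP.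
  + by left; rewrite subr_le0 ltW.
  + by right; rewrite subr_ge0 ltW.
- apply: (key y x) => //; first exact: ltW.
  rewrite ge_min le_max; apply/andP; split; apply/orP.
  + by right; rewrite subr_le0 ltW.
  + by left; rewrite subr_ge0 ltW.
Qed.



Lemma sign_lt d x y : U d -> (forall c, I c -> d c <> c) ->
  I x -> I y -> d x < x -> d y < y.
Proof.
move=> Ud nf Ix Iy dx; case: (ltgtP (d y) y) => // h.
- by exfalso; exact: (no_two_sides Ud nf Ix Iy dx h).
- by exfalso; exact: (nf y Iy h).
Qed.
Lemma sign_gt d x y : U d -> (forall c, I c -> d c <> c) ->
  I x -> I y -> x < d x -> y < d y.
Proof.
move=> Ud nf Ix Iy dx; case: (ltgtP (d y) y) => // h.
- by exfalso; exact: (no_two_sides Ud nf Iy Ix h dx).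
- by exfalso; exact: (nf y Iy h).
Qed.

Local Notation G := (commutator_subgroup a b U).

Lemma comm_in_U : commutators U `<=` U.
Proof.
move=> c [al [be [ali [bei [Ual Ube [e1 e2] [e3 e4] ->]]]]].
rewrite (inv_uniq Ual e1) (inv_uniq Ube e3).
apply: U_comp; last exact: U_uinv.
apply: U_comp; last exact: U_uinv.
exact: U_comp.
Qed.
Lemma G_U : G `<=` U.
Proof. by move=> g Gg; apply: Gg; [exact: HU | exact: comm_in_U]. Qed.
Lemma comm_G : commutators U `<=` G.
Proof. by move=> c cc K HK sub; exact: sub. Qed.
Lemma G_id : G id.
Proof. by move=> K [_ [h _]] _. Qed.
Lemma G_comp f g : G f -> G g -> G (f \o g).
Proof.
move=> Gf Gg K HK s; case: (HK) => _ [_ [h _]].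
by apply: h; [exact: Gf | exact: Gg].
Qed.
Lemma G_inv f : G f -> G (uinv f).
Proof.
move=> Gf K HK s; have Kf := Gf K HK s.
case: HK => _ [_ [_ hi]]; have [g [Kg [e1 _]]] := hi f Kf.
by rewrite -(inv_uniq (G_U Gf) e1).
Qed.
Lemma G_nofix g : G g -> g <> id -> forall c, I c -> g c <> c.
Proof. exact: Hfree. Qed.
Lemma G_iter n h : G h -> G (iter n h).
Proof. by move=> Gh; elim: n => [|n IH]; [exact: G_id | exact: G_comp Gh IH]. Qed.

Definition ltf (f g : R -> R) := forall x, I x -> f x < g x.
Definition lef (f g : R -> R) := forall x, I x -> f x <= g x.

Lemma G_trich f g : G f -> G g -> f = g \/ ltf f g \/ ltf g f.
Proof.
move=> Gf Gg; have [x0 Ix0] := exI.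
have Ug := G_U Gg.
set d := uinv g \o f.
have Gd : G d by apply: G_comp; [exact: G_inv|].
have Ud := G_U Gd.
have fgd : f = g \o d by apply/funext => x; rewrite /d /= uinvK.
case: (pselect (d = id)) => [did|dn]; first by left; rewrite fgd did.
right; have nf := G_nofix Gd dn.
case: (ltgtP (d x0) x0) => h.
- left => x Ix; rewrite fgd /=.
  exact: (U_lt Ug (U_I Ud Ix) Ix (sign_lt Ud nf Ix0 Ix h)).
- right => x Ix; rewrite fgd /=.
  exact: (U_lt Ug Ix (U_I Ud Ix) (sign_gt Ud nf Ix0 Ix h)).
- by exfalso; exact: (nf x0 Ix0 h).
Qed.

Lemma lt_at f g x0 : G f -> G g -> I x0 -> f x0 < g x0 -> ltf f g.
Proof.
move=> Gf Gg Ix0 h; case: (G_trich Gf Gg) => [e|[//|l]].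
- by move: h; rewrite e ltxx.
- by have := l x0 Ix0; rewrite ltNge (ltW h).
Qed.

Lemma arch h x0 y : G h -> ltf id h -> I x0 -> I y ->
  exists k, y < iter k h x0.
Proof.
move=> Gh hpos Ix0 Iy; apply: contrapT => nk.
have ub k : iter k h x0 <= y.
  by rewrite leNgt; apply/negP => hk; apply: nk; exists k.
have Uh := G_U Gh.
have Iit k : I (iter k h x0) by exact: U_I (G_U (G_iter k Gh)) Ix0.
set E := range (fun k => iter k h x0).
have hs : has_sup E.
  split; first by exists x0, 0%N.
  by exists y => _ [k _ <-]; exact: ub.
set l := sup E.
have x0l : x0 <= l by apply: sup_upper_bound => //; exists 0%N.
have ly : l <= y.
  by apply: ge_sup; [exists x0, 0%N | move=> _ [k _ <-]; exact: ub].
have Il : I l by exact: segI Ix0 Iy x0l ly.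
set hl := uinv h l.
have Ihl : I hl by exact: U_I (U_uinv Uh) Il.
have hll : hl < l by have := hpos hl Ihl; rewrite /hl uinvK.
have lp : 0 < l - hl by rewrite subr_gt0.
have [e [k _ <-] he] := sup_adherent lp hs.
have he' : hl < iter k h x0 by move: he; rewrite /l opprB addrCA subrr addr0.
have := U_lt Uh Ihl (Iit k) he'; rewrite /hl (uinvK _ Uh) => h1.
have Ek : E (iter k.+1 h x0) by exists k.+1.
have := sup_upper_bound hs Ek.
by rewrite leNgt iterS h1.
Qed.

Lemma lef_refl f : lef f f.
Proof. by move=> x _. Qed.

Lemma bracket h f : G h -> ltf id h -> G f -> ltf id f ->
  exists m, lef (iter m h) f /\ ltf f (iter m.+1 h).
Proof.
move=> Gh hp Gf fp; have [x0 Ix0] := exI.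
have Uf := G_U Gf.
have [k hk] := arch Gh hp Ix0 (U_I Uf Ix0).
have P : exists k, `[< ltf f (iter k h) >].
  by exists k; apply/asboolP; exact: lt_at Gf (G_iter k Gh) Ix0 hk.
case: (ex_minnP P) => k' /asboolP hk' mink.
case: k' hk' mink => [|m] hm mink.
  by have := hm x0 Ix0; have := fp x0 Ix0; rewrite /= => h1 h2; move: (lt_trans h1 h2); rewrite ltxx.
exists m; split=> //.
case: (G_trich Gf (G_iter m Gh)) => [->|[l1|l2]]; first exact: lef_refl.
- by have := mink m (asboolT l1); rewrite ltnn.
- by move=> x Ix; apply/ltW/l2.
Qed.

Lemma core f g : G f -> G g -> ltf id f -> ltf id g -> ~ ltf (g \o f) (f \o g).
Proof.
move=> Gf Gg fp gp glt; have [x0 Ix0] := exI.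
have Uf := G_U Gf; have Ug := G_U Gg.
case: (pselect (exists e, [/\ G e, ltf id e & forall h, G h -> ltf id h -> lef e h]))
   => [[e [Ge ep emin]]|nomin].
  have Ue := G_U Ge.
  have pow p : G p -> ltf id p -> exists m, p = iter m e.
    move=> Gp pp; have [m [h1 h2]] := bracket Ge ep Gp pp.
    have GE := G_iter m Ge; have UE := G_U GE.
    set E := iter m e in h1 h2 GE UE *.
    set r := uinv E \o p.
    have Gr : G r by apply: G_comp; [exact: G_inv|].
    have Ur := G_U Gr.
    have pr : p = E \o r by apply/funext => x; rewrite /r /= uinvK.
    case: (G_trich Gr G_id) => [rid|[rlt|rgt]].
    - by exists m; rewrite pr rid.
    - exfalso; have := h1 x0 Ix0; rewrite pr /=.
      by rewrite leNgt (U_lt UE (U_I Ur Ix0) Ix0 (rlt x0 Ix0)).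
    - exfalso; have er := emin r Gr rgt.
      have := h2 x0 Ix0; rewrite iterSr pr /= -/E.
      by rewrite ltNge U_leE ?er //; exact: U_I.
  have [m em] := pow f Gf fp; have [n en] := pow g Gg gp.
  move: (glt x0 Ix0); rewrite em en /= -!iterD addnC ltxx; done.
have nm : forall e, G e -> ltf id e -> exists h, [/\ G h, ltf id h & ltf h e].
  move=> e Ge ep; apply: contrapT => nh; apply: nomin; exists e; split=> // h Gh hp.
  case: (G_trich Ge Gh) => [->|[l1|l2]]; first exact: lef_refl.
  - by move=> x Ix; apply/ltW/l1.
  - by exfalso; apply: nh; exists h.
have Ggf : G (g \o f) by exact: G_comp.
have Ugf := G_U Ggf.
set c := uinv (g \o f) \o (f \o g).
have Gc : G c by apply: G_comp; [exact: G_inv | exact: G_comp].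
have Uc := G_U Gc.
have fgc : forall x, f (g x) = g (f (c x)).
  by move=> x; rewrite /c /=; have := uinvK (f (g x)) Ugf.
have cp : ltf id c.
  move=> x Ix; rewrite /c /=.
  rewrite -[X in X < _](uinvK' x Ugf) U_ltE //; first exact: glt.
  - exact: U_uinv.
  - exact: U_I Ugf Ix.
  - exact: (U_I Uf (U_I Ug Ix)).
have [ga [Gga gap gac]] := nm c Gc cp.
have Uga := G_U Gga.
have [h [Gh hp hh]] : exists h, [/\ G h, ltf id h & lef (h \o h) c].
  case: (G_trich (G_comp Gga Gga) Gc) => [e|[l|l]].
  - by exists ga; split=> //; rewrite e; exact: lef_refl.
  - by exists ga; split=> // x Ix; apply/ltW/l.
  - exists (uinv ga \o c); split.
    + by apply: G_comp; [exact: G_inv|].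
    + move=> x Ix /=; rewrite -[X in X < _](uinvK' x Uga) U_ltE //.
      * exact: gac.
      * exact: U_uinv.
      * exact: U_I Uga Ix.
      * exact: U_I Uc Ix.
    + move=> x Ix /=.
      set y := uinv ga (c x).
      have Iy : I y := U_I (U_uinv Uga) (U_I Uc Ix).
      have cx : c x = ga y by rewrite /y uinvK.
      rewrite cx; apply: ltW.
      rewrite -(U_ltE Uga) ?uinvK //.
      * by rewrite cx; exact: l y Iy.
      * exact: (U_I (U_uinv Uga) (U_I Uc Iy)).
      * exact: (U_I Uc Ix).
have Uh := G_U Gh.
have UI k x : I x -> I (iter k h x) by move=> Ix; exact: U_I (G_U (G_iter k Gh)) Ix.
have Uk k := G_U (G_iter k Gh).
have [m [fm1 fm2]] := bracket Gh hp Gf fp.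
have [n [gn1 gn2]] := bracket Gh hp Gg gp.
have Ig : I (g x0) by exact: U_I Ug Ix0.
have A : f (g x0) < iter (m.+1 + n.+1) h x0.
  rewrite iterD; apply: (lt_trans (fm2 _ Ig)).
  by rewrite U_ltE //; [exact: gn2 | exact: UI].
have Ic : I (c x0) by exact: U_I Uc Ix0.
have B : iter (n + (m + 2)) h x0 <= g (f (c x0)).
  have I2 : I (iter 2 h x0) := UI 2%N x0 Ix0.
  have I3 : I (iter m h (iter 2 h x0)) := UI m _ I2.
  have Ifc : I (f (c x0)) := U_I Uf Ic.
  rewrite !iterD.
  apply: (le_trans _ (gn1 _ Ifc)).
  rewrite (U_leE (Uk n) I3 Ifc).
  apply: (le_trans _ (fm1 _ Ic)).
  rewrite (U_leE (Uk m) I2 Ic).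
  exact: hh.
move: A; rewrite fgc ltNge.
have -> : (m.+1 + n.+1 = n + (m + 2))%N by lia.
by rewrite B.
Qed.

Lemma comm_pos f g : G f -> G g -> ltf id f -> ltf id g -> f \o g = g \o f.
Proof.
move=> Gf Gg fp gp.
case: (G_trich (G_comp Gf Gg) (G_comp Gg Gf)) => [//|[l|l]]; exfalso.
- exact: core Gg Gf gp fp l.
- exact: core Gf Gg fp gp l.
Qed.

Lemma comm_inv f g : U f -> f \o g = g \o f -> uinv f \o g = g \o uinv f.
Proof.
move=> Uf e; apply/funext => x /=.
have e' y : f (g y) = g (f y) := congr1 (fun h => h y) e.
by rewrite -[in LHS](uinvK x Uf) -e' uinvK'.
Qed.

Lemma pos_or f : G f -> f = id \/ ltf id f \/ ltf id (uinv f).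
Proof.
move=> Gf; have Uf := G_U Gf.
case: (G_trich Gf G_id) => [->|[l|l]]; [by left | | by right; left].
right; right => x Ix /=.
have Iy : I (uinv f x) by exact: U_I (U_uinv Uf) Ix.
by have := l _ Iy; rewrite /= uinvK.
Qed.

Lemma uinv_uinv f : U f -> uinv (uinv f) = f.
Proof.
move=> Uf; apply/esym/inv_uniq; first exact: U_uinv.
by apply/funext => x; rewrite /= uinvK'.
Qed.

Lemma G_comm f g : G f -> G g -> f \o g = g \o f.
Proof.
have key f' g' : G f' -> G g' -> ltf id g' -> f' \o g' = g' \o f'.
  move=> Gf Gg gp; case: (pos_or Gf) => [->|[fp|fp]]; first by [].
  - exact: comm_pos.
  - have := comm_inv (U_uinv (G_U Gf)) (comm_pos (G_inv Gf) Gg fp gp).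
    by rewrite uinv_uinv //; exact: G_U.
move=> Gf Gg; case: (pos_or Gg) => [->|[gp|gp]]; first by [].
- exact: key.
- have e := key _ _ Gf (G_inv Gg) gp.
  have := comm_inv (U_uinv (G_U Gg)) (esym e).
  by rewrite uinv_uinv; [move=> ->| exact: G_U].
Qed.

Section Breaks.
Variable S : Type.
Variable H : R -> S.

Definition brk y k := (forall x, I x -> x < y -> H (k x) = H x) /\ H (k y) <> H y.
Definition fbrk y k := [/\ commutators U k, I y, k y < y & brk y k].

Lemma brk_neq y k : brk y k -> k <> id.
Proof. by move=> [_ h] e; apply: h; rewrite e. Qed.

Lemma fbrk_uniq y1 y2 k1 k2 : fbrk y1 k1 -> fbrk y2 k2 -> y1 = y2.
Proof.
wlog : y1 y2 k1 k2 / y1 < y2.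
  move=> W f1 f2; case: (ltgtP y1 y2) => h //.
  - exact: W f1 f2.
  - by apply/esym; exact: W f2 f1.
move=> y12 [c1 Iy1 k1y1 [b1 n1]] [c2 Iy2 k2y2 [b2 n2]].
have Uk1 := comm_in_U c1; have Uk2 := comm_in_U c2.
have Gk2 := comm_G c2.
have k2y1 : k2 y1 < y1.
  apply: (sign_lt Uk2 (G_nofix Gk2 (brk_neq (conj b2 n2))) Iy2 Iy1 k2y2).
exfalso; apply: n1.
have Ik1 : I (k1 y1) := U_I Uk1 Iy1.
have Ik2 : I (k2 y1) := U_I Uk2 Iy1.
rewrite -(b2 _ Ik1 (lt_trans k1y1 y12)).
have e := G_comm Gk2 (comm_G c1).
have e' : k2 (k1 y1) = k1 (k2 y1) := congr1 (fun h => h y1) e.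
rewrite e'.
rewrite (b1 _ Ik2 k2y1).
exact: b2.
Qed.

Lemma comm_conj s k : U s -> commutators U k -> commutators U (s \o k \o uinv s).
Proof.
move=> Us [al [be [ali [bei [Ual Ube [e1 e2] [e3 e4] ->]]]]].
have p1 x : al (ali x) = x := congr1 (fun h => h x) e1.
have p2 x : ali (al x) = x := congr1 (fun h => h x) e2.
have p3 x : be (bei x) = x := congr1 (fun h => h x) e3.
have p4 x : bei (be x) = x := congr1 (fun h => h x) e4.
have Usi := U_uinv Us.
exists (s \o al \o uinv s), (s \o be \o uinv s), (s \o ali \o uinv s), (s \o bei \o uinv s).
split.
- by apply: U_comp => //; exact: U_comp.
- by apply: U_comp => //; exact: U_comp.
- by split; apply/funext => x /=; rewrite uinvK' // ?p1 ?p2 uinvK.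
- by split; apply/funext => x /=; rewrite uinvK' // ?p3 ?p4 uinvK.
- by apply/funext => x /=; rewrite !uinvK'.
Qed.

Lemma fbrk_conj y k s T : fbrk y k -> U s -> I T -> y < T ->
  (forall x, I x -> x < T -> H (s x) = H x) -> fbrk (s y) (s \o k \o uinv s).
Proof.
move=> [ck Iy ky [bk nk]] Us IT yT hs.
have Uk := comm_in_U ck.
have Iky : I (k y) := U_I Uk Iy.
split.
- exact: comm_conj.
- exact: U_I.
- by rewrite /= uinvK' // U_ltE.
- split.
  + move=> x Ix xsy /=.
    set w := uinv s x.
    have Iw : I w := U_I (U_uinv Us) Ix.
    have wy : w < y by rewrite -(U_ltE Us) // /w uinvK.
    have Ikw : I (k w) := U_I Uk Iw.
    have kwT : k w < T by apply: (lt_trans _ (lt_trans ky yT)); rewrite U_ltE.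
    rewrite (hs _ Ikw kwT) (bk _ Iw wy) -[in RHS](uinvK x Us) -/w hs //.
    exact: lt_trans wy yT.
  + rewrite /= uinvK' // (hs _ Iky (lt_trans ky yT)) hs //.
Qed.

Lemma brk_inv y k k' : brk y k -> U k -> I y -> U k' ->
  (forall x, k (k' x) = x) -> (forall x, k' (k x) = x) -> brk (k y) k'.
Proof.
move=> [bk nk] Uk Iy Uk' e1 e2; split.
- move=> x Ix xky.
  have Iz : I (k' x) := U_I Uk' Ix.
  have zy : k' x < y by rewrite -(U_ltE Uk) // e1.
  by rewrite -(bk _ Iz zy) e1.
- by rewrite e2 => h; apply: nk; rewrite h.
Qed.

Definition Bm := [set t | I t /\ exists rho, [/\ U rho, rho t < t & brk t rho]].

Lemma no_overlap t1 t2 r1 r2 : I t1 -> I t2 -> t1 < t2 -> U r1 -> U r2 ->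
  r1 t1 < t1 -> brk t1 r1 -> r2 t2 < t2 -> brk t2 r2 -> r2 t2 < t1 -> False.
Proof.
move=> It1 It2 t12 Ur1 Ur2 r1t [b1 n1] r2t [b2 n2] ov.
have Ui1 := U_uinv Ur1; have Ui2 := U_uinv Ur2.
have s1 : r2 t1 < t1 by apply: lt_trans ov; rewrite U_ltE.
have Ir2t1 : I (r2 t1) := U_I Ur2 It1.
have Ir1t1 : I (r1 t1) := U_I Ur1 It1.
set ka := r2 \o r1 \o uinv r2 \o uinv r1.
set kb := r1 \o r2 \o uinv r1 \o uinv r2.
have cka : commutators U ka.
  exists r2, r1, (uinv r2), (uinv r1); split => //; split;
  by apply/funext => x /=; rewrite ?uinvK ?uinvK'.
have ckb : commutators U kb.
  exists r1, r2, (uinv r1), (uinv r2); split => //; split;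
  by apply/funext => x /=; rewrite ?uinvK ?uinvK'.
have Uka := comm_in_U cka; have Ukb := comm_in_U ckb.
have eab x : ka (kb x) = x by rewrite /ka /kb /= !uinvK' ?uinvK.
have eba x : kb (ka x) = x by rewrite /ka /kb /= !uinvK' ?uinvK.
set y := r1 (r2 t1).
have Iy : I y := U_I Ur1 Ir2t1.
have kay : ka y = r2 (r1 t1) by rewrite /ka /y /= !uinvK'.
have yt1 : y < t1 by apply: lt_trans r1t; rewrite U_ltE.
have kyt1 : ka y < t1 by rewrite kay; apply: lt_trans s1; rewrite U_ltE.
have bka : brk y ka.
  split.
  - move=> x Ix xy; rewrite /ka /=.
    set u := uinv r1 x.
    have Iu : I u := U_I Ui1 Ix.
    have uy : u < r2 t1 by rewrite -(U_ltE Ur1) // /u uinvK.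
    set v := uinv r2 u.
    have Iv : I v := U_I Ui2 Iu.
    have vt1 : v < t1 by rewrite -(U_ltE Ur2) // /v uinvK.
    have Ir1v : I (r1 v) := U_I Ur1 Iv.
    have r1vt2 : r1 v < t2.
      by apply: (lt_trans _ (lt_trans r1t t12)); rewrite U_ltE.
    rewrite (b2 _ Ir1v r1vt2) (b1 _ Iv vt1).
    rewrite -(b2 _ Iv (lt_trans vt1 t12)) /v uinvK //.
    rewrite -(b1 _ Iu (lt_trans uy s1)) /u uinvK //.
  - rewrite kay (b2 _ Ir1t1 (lt_trans r1t t12)) /y (b1 _ Ir2t1 s1).
    by rewrite (b2 _ It1 t12).
have kan : ka <> id := brk_neq bka.
have Gka := comm_G cka.
have [y0 [k0 [fb y0t1]]] : exists y0 k0, fbrk y0 k0 /\ y0 < t1.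
  case: (ltgtP (ka y) y) => h.
  - by exists y, ka; split.
  - exists (ka y), kb; split => //; split => //.
    + exact: U_I.
    + by rewrite eba.
    + exact: brk_inv.
  - by exfalso; exact: (G_nofix Gka kan Iy h).
have [ck0 Iy0 _ _] := fb.
have f1 := fbrk_conj fb Ur1 It1 y0t1 b1.
have f2 := fbrk_conj fb Ur2 It2 (lt_trans y0t1 t12) b2.
have e1 := fbrk_uniq f1 fb.
have e2 := fbrk_uniq f2 fb.
have ei1 : uinv r1 y0 = y0 by rewrite -{1}e1 uinvK'.
have ei2 : uinv r2 y0 = y0 by rewrite -{1}e2 uinvK'.
apply: (G_nofix Gka kan Iy0).
by rewrite /ka /= ei1 ei2 e1 e2.
Qed.

Lemma Bm_countable : countable Bm.
Proof.
have ex : forall t, exists r : R -> R, r t < t /\ (Bm t -> U r /\ brk t r).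
  move=> t; case: (pselect (Bm t)) => [[It [r [hr1 hr2 hr3]]]|nB]; first by exists r.
  by exists (fun x => x - 1); split => //; rewrite ltrBlDr ltrDl ltr01.
have [rho hrho] := choice ex.
apply: (@separated_open_countable R R (fun t => `]rho t t, t[%classic) Bm).
- by move=> t; exact: itv_open.
- move=> t; have [h _] := hrho t; exists ((rho t t + t) / 2) => /=.
  by rewrite in_itv /= !midf_lt.
- move=> i j Bi Bj [z [/= zi zj]].
  move: zi zj; rewrite !in_itv /= => /andP[zi1 zi2] /andP[zj1 zj2].
  have [ri [Ui bi]] := (proj1 (hrho i), proj2 (hrho i) Bi).
  have [rj [Uj bj]] := (proj1 (hrho j), proj2 (hrho j) Bj).
  have [Ii _] := Bi; have [Ij _] := Bj.
  case: (ltgtP i j) => // h; exfalso.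
  - exact: (no_overlap Ii Ij h Ui Uj ri bi rj bj (lt_trans zj1 zi2)).
  - exact: (no_overlap Ij Ii h Uj Ui rj bj ri bi (lt_trans zi1 zj2)).
Qed.

End Breaks.

Section Pred.
Variable S : Type.
Variable sd : S.

Definition FT := {classic (R -> S)}.
Definition word : rel FT := proj1_sig (well_ordering_principle FT).
Lemma wordP : well_order word.
Proof. exact: (proj2_sig (well_ordering_principle FT)). Qed.

Lemma word_min (A : set (R -> S)) : A !=set0 ->
  exists z, A z /\ forall x, A x -> word z x.
Proof.
move=> [x Ax].
have ne : nonempty [pred y : FT | `[< A y >]] by exists x; rewrite inE.
have [z [[Az lb] _]] := wordP ne.
exists z; split; first by move: Az; rewrite inE.
by move=> y Ay; apply: lb; rewrite inE.
Qed.

Lemma word_refl (x : FT) : word x x.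
Proof.
have ne : nonempty [pred y : FT | y == x] by exists x; rewrite inE.
have [z [[Az lb] _]] := wordP ne.
have zx : z = x by apply/eqP; move: Az; rewrite inE.
rewrite -{1}zx; apply: lb; by rewrite inE.
Qed.

Lemma word_anti (x y : FT) : word x y -> word y x -> x = y.
Proof.
move=> xy yx.
have ne : nonempty [pred z : FT | (z == x) || (z == y)] by exists x; rewrite inE eqxx.
have [z [_ uz]] := wordP ne.
have mx : minimum_of word [pred z : FT | (z == x) || (z == y)] x.
  split; first by rewrite inE eqxx.
  by move=> w; rewrite inE => /orP[] /eqP ->; [exact: word_refl|].
have my : minimum_of word [pred z : FT | (z == x) || (z == y)] y.
  split; first by rewrite inE eqxx orbT.
  by move=> w; rewrite inE => /orP[] /eqP ->; [|exact: word_refl].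
by rewrite -(uz _ mx) -(uz _ my).
Qed.

Definition least (A : set (R -> S)) : R -> S :=
  match pselect (A !=set0) with
  | left P => proj1_sig (cid (word_min P)) | right _ => fun _ => sd end.
Lemma leastP A : A !=set0 -> A (least A) /\ forall x, A x -> word (least A) x.
Proof.
move=> ne; rewrite /least; case: pselect => [P|//].
by case: (cid (word_min P)).
Qed.

Definition Fit t (h : R -> S) := [set G : R -> S | exists phi,
  U phi /\ forall x, I x -> x < t -> G (phi x) = h x].
Definition Gl t h := least (Fit t h).
Definition Aset t h := [set s | exists phi, [/\ U phi,
  (forall x, I x -> x < t -> Gl t h (phi x) = h x) & s = phi t]].
Definition pred_of (G : R -> S) (A : set R) : S :=
  match pselect (exists v, exists2 s0, A s0 & forall s, A s -> s <= s0 -> G s = v) with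
  | left P => proj1_sig (cid P) | right _ => sd end.
Definition Pr t h := pred_of (Gl t h) (Aset t h).

Lemma Fit_ne t h : Fit t h h.
Proof. by exists id; split => //; exact: U_id. Qed.

Lemma GlP t h : Fit t h (Gl t h) /\ forall g, Fit t h g -> word (Gl t h) g.
Proof. by apply: leastP; exists h; exact: Fit_ne. Qed.

Lemma Pr_pred : predictor a b Pr.
Proof.
move=> t h1 h2 It e.
have e' : forall x, I x -> x < t -> h1 x = h2 x.
  by move=> x /andP[ax _] xt; exact: e.
have eF : Fit t h1 = Fit t h2.
  apply/seteqP; split => G [phi [Uphi hp]]; exists phi; split => // x Ix xt;
  by rewrite hp // e'.
have eA : Aset t h1 = Aset t h2.
  rewrite /Aset /Gl eF.
  apply/seteqP; split => z [phi [Uphi hp ->]]; exists phi; split => // x Ix xt;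
  by rewrite hp // e'.
by rewrite /Pr eA /Gl eF.
Qed.

Lemma Pr_anon : anonymous a b U Pr.
Proof.
move=> phi t s h Uphi It Is e.
have Ui := U_uinv Uphi.
have ist : uinv phi t = s by rewrite -e uinvK'.
have ltt x : I x -> x < s -> phi x < t by move=> Ix xs; rewrite -e U_ltE.
have lts x : I x -> x < t -> uinv phi x < s.
  by move=> Ix xt; rewrite -(U_ltE Uphi) ?uinvK ?e //; exact: U_I Ui Ix.
have eF : Fit t h = Fit s (h \o phi).
  apply/seteqP; split => G [psi [Upsi hp]].
  - exists (psi \o phi); split; first exact: U_comp.
    by move=> x Ix xs /=; rewrite hp //; [exact: U_I | exact: ltt].
  - exists (psi \o uinv phi); split; first exact: U_comp.
    move=> x Ix xt /=; rewrite hp //; first by rewrite /= uinvK.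
    + exact: U_I Ui Ix.
    + exact: lts.
have eA : Aset t h = Aset s (h \o phi).
  rewrite /Aset /Gl -eF.
  apply/seteqP; split => z [psi [Upsi hp ->]].
  - exists (psi \o phi); split; first exact: U_comp.
    + by move=> x Ix xs /=; rewrite hp //; [exact: U_I | exact: ltt].
    + by rewrite /= e.
  - exists (psi \o uinv phi); split; first exact: U_comp.
    + move=> x Ix xt /=; rewrite hp //; first by rewrite /= uinvK.
      * exact: U_I Ui Ix.
      * exact: lts.
    + by rewrite /= ist.
by rewrite /Pr eA /Gl eF.
Qed.

Lemma Gl_mono (F : R -> S) t t' : t <= t' -> word (Gl t F) (Gl t' F).
Proof.
move=> tt'; apply: (proj2 (GlP t F)).
have [[phi [Uphi hp]] _] := GlP t' F.
exists phi; split => // x Ix xt; apply: hp => //; exact: lt_le_trans xt tt'.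
Qed.

Lemma M_countable (F : R -> S) :
  countable [set t | I t /\ forall t', I t' -> t < t' -> Gl t' F <> Gl t F].
Proof.
set M := [set t | I t /\ forall t', I t' -> t < t' -> Gl t' F <> Gl t F].
have ex : forall t, exists u, t < u /\ (forall j, M j -> t < j -> u <= j).
  move=> t; case: (pselect (exists j, M j /\ t < j)) => [[j0 [Mj0 tj0]]|nj]; last first.
    exists (t + 1); split; first by rewrite ltrDl ltr01.
    by move=> j Mj tj; exfalso; apply: nj; exists j.
  set A := [set g : R -> S | exists j, [/\ M j, t < j & g = Gl j F]].
  have neA : A !=set0 by exists (Gl j0 F), j0.
  have [[js [Mjs tjs ejs]] gmin] := leastP neA.
  exists js; split => // j Mj tj; rewrite leNgt; apply/negP => jjs.
  have w1 : word (Gl j F) (Gl js F) := Gl_mono F (ltW jjs).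
  have w2 : word (Gl js F) (Gl j F).
    by rewrite -ejs; apply: gmin; exists j.
  have e := word_anti w1 w2.
  have [Ij hj] := Mj; have [Ijs _] := Mjs.
  by apply: (hj js Ijs jjs); rewrite e.
have [u hu] := choice ex.
apply: (@separated_open_countable R R (fun t => `]t, u t[%classic) M).
- by move=> t; exact: itv_open.
- move=> t; have [h _] := hu t; exists ((t + u t) / 2) => /=.
  by rewrite in_itv /= !midf_lt.
- move=> i j Mi Mj [z [/= zi zj]].
  move: zi zj; rewrite !in_itv /= => /andP[zi1 zi2] /andP[zj1 zj2].
  case: (ltgtP i j) => // h; exfalso.
  + have := (proj2 (hu i)) j Mj h; rewrite leNgt => /negP; apply.
    exact: lt_trans zj1 zi2.
  + have := (proj2 (hu j)) i Mi h; rewrite leNgt => /negP; apply.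
    exact: lt_trans zi1 zj2.
Qed.

Lemma Pr_good : good_predictor a b Pr.
Proof.
move=> F.
set M := [set t | I t /\ forall t', I t' -> t < t' -> Gl t' F <> Gl t F].
have exH : forall q : rat, exists Hq : R -> S, I (ratr q) -> exists phi,
    [/\ U phi, (forall x, I x -> x < ratr q -> Gl (ratr q) F (phi x) = F x)
      & Hq = Gl (ratr q) F \o phi].
  move=> q; case: (pselect (I (ratr q))) => Iq; last by exists F.
  have [[phi [Uphi hp]] _] := GlP (ratr q) F.
  by exists (Gl (ratr q) F \o phi) => _; exists phi; split.
have [HH hHH] := choice exH.
set C := \bigcup_(o in [set: option rat])
   (match o with None => M | Some q => Bm (HH q) end).
have cC : countable C.
  apply: bigcup_countable; first exact: countableP.
  by case => [q|] _; [exact: Bm_countable | exact: M_countable].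
exists C; split.
- by apply: countable_measurable => //; exact: measurable_set1.
- exact: countable_lebesgue_measure0.
move=> t [It err].
case: (pselect (M t)) => [Mt|nM]; first by exists None.
have [t' [It' [tt' e]]] : exists t', [/\ I t', t < t' & Gl t' F = Gl t F].
  apply: contrapT => ne; apply: nM; split => // t' It' tt' e; apply: ne; exists t'; split => //.
have [q] := rat_in_itvoo tt'; rewrite in_itv /= => /andP[tq qt'].
set r := ratr q in tq qt'.
have Ir : I r := segI It It' (ltW tq) (ltW qt').
have er : Gl r F = Gl t F.
  have e0 : Gl t' F = Gl t F := e.
  apply: word_anti.
  - by have := Gl_mono F (ltW qt'); rewrite e0.
  - exact: (Gl_mono F (ltW tq)).
have [phi [Uphi hp eH]] := hHH q Ir.
exists (Some q); first by [].
set G0 := Gl t F.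
have hp' x : I x -> x < t -> G0 (phi x) = F x.
  by move=> Ix xt; rewrite /G0 -er; apply: hp => //; exact: lt_trans xt tq.
have Asg : Aset t F (phi t) by exists phi; split.
have Gsg : G0 (phi t) = F t by rewrite /G0 -er; exact: hp.
have [z [Az zlt Gz]] : exists z, [/\ Aset t F z, z < phi t & G0 z <> G0 (phi t)].
  move: err; rewrite /Pr /pred_of; case: pselect => [P|nP] err.
  - case: (cid P) err => v [s0 As0 hv] /= err.
    case: (leP (phi t) s0) => h.
    + by exfalso; apply: err; rewrite -Gsg -(hv _ Asg h).
    + exists s0; split => //; move: Gsg; rewrite /G0 => ->; rewrite (hv _ As0 (lexx _)); exact: err.
  - apply: contrapT => nz; apply: nP; exists (G0 (phi t)), (phi t) => // s As sle.
    apply: contrapT => ne; apply: nz; exists s; split => //.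
    by rewrite lt_neqAle sle andbT; apply/eqP => es; apply: ne; rewrite es.
have [psi [Upsi hpsi ez]] := Az.
have Ui := U_uinv Uphi.
split => //; exists (uinv phi \o psi); split.
- exact: U_comp.
- rewrite /= -(U_ltE Uphi) ?uinvK -?ez //.
  by rewrite ez; exact: U_I Ui (U_I Upsi It).
- rewrite /brk eH; split.
  + move=> x Ix xt /=; rewrite uinvK //  er -/G0.
    by rewrite /G0 hpsi //; symmetry; exact: hp'.
  + rewrite /= uinvK //; change (Gl r F (psi t) <> Gl r F (phi t)).
    by rewrite er -ez; exact: Gz.
Qed.

End Pred.

End Main.

Theorem theorem1p5 (R : realType) (a b : \bar R) (U : set (R -> R)) :
  (a < b)%E ->
  homeo_subgroup a b U ->
  (forall g, commutator_subgroup a b U g -> g <> id ->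
     forall x, ointv a b x -> g x <> x) ->
  (forall f, U f -> f <> id ->
     forall s t, ointv a b s -> ointv a b t -> f s = s -> f t = t -> s = t) ->
  forall (S : Type), inhabited S ->
    exists P : R -> (R -> S) -> S,
      [/\ predictor a b P, good_predictor a b P & anonymous a b U P].
Proof.
move=> ab HU Hfree _ S [sd].
exists (Pr a b U sd); split.
- exact: Pr_pred.
- exact: Pr_good.
- exact: Pr_anon.
Qed.
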